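(* Let $j,k_G,k_H$ be positive integers with $j\le k_G\le k_H$, let $G$ be a $(j,k_G)$-biclique and $H$ a $(j,k_H)$-biclique, and let $g(x)$ and $h(x)$ be the interesting factors of $P_G(x)$ and $P_H(x)$ respectively. If $\bar G$ and $\bar H$ are matching equivalent, then $g(x)=h(x+k_H-k_G)$.
   Context: All graphs are finite and simple. For integers $1\le j\le k$, a $(j,k)$-biclique is a graph whose vertex set is the disjoint union of a $j$-clique and a $k$-clique, with an arbitrary set of additional edges each joining a vertex of the $j$-clique to a vertex of the $k$-clique; $\bar G$ denotes the complement of $G$. $P_G(x)$ is the chromatic polynomial, $(x)_n=x(x-1)\cdots(x-n+1)$ the falling factorial. For a $(j,k)$-biclique $G$, the polynomial $(x)_k$ divides $P_G(x)$, and the interesting factor of $P_G$ is the degree-$j$ polynomial $g(x)=P_G(x)/(x)_k$. $m_F^i$ denotes the number of matchings with $i$ edges in a graph $F$; two graphs $F_1,F_2$ are matching equivalent if $m_{F_1}^i=m_{F_2}^i$ for all $i\ge 0$. *)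

(* Defs.v *)
From HB Require Import structures.
From mathcomp Require Import all_boot all_order all_algebra.
Set Implicit Arguments. Unset Strict Implicit. Unset Printing Implicit Defensive.
Import Order.TTheory GRing.Theory Num.Theory.
Local Open Scope ring_scope.

Definition simple_graph (T : finType) (e : rel T) : Prop :=
  symmetric e /\ irreflexive e.

Definition complement (T : finType) (e : rel T) : rel T :=
  fun x y => (x != y) && ~~ e x y.

(* (j,k)-biclique: vertex set 'I_j + 'I_k (disjoint union of the j-clique and
   the k-clique); any two distinct vertices on the same side are adjacent;
   edges between the sides are arbitrary. *)
Definition biclique (j k : nat) (e : rel ('I_j + 'I_k)%type) : Prop :=
  simple_graph e /\
  (forall a b : 'I_j, a != b -> e (inl a) (inl b)) /\
  (forall a b : 'I_k, a != b -> e (inr a) (inr b)).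

Definition is_edge (T : finType) (e : rel T) (A : {set T}) : bool :=
  [exists x, exists y, e x y && (A == [set x; y])].

Definition is_matching (T : finType) (e : rel T) (M : {set {set T}}) : bool :=
  [forall A in M, is_edge e A] &&
  [forall A in M, forall B in M, (A != B) ==> [disjoint A & B]].

Definition matching_number (T : finType) (e : rel T) (i : nat) : nat :=
  #|[set M : {set {set T}} | is_matching e M && (#|M| == i)%N]|.

Definition matching_equivalent (T1 T2 : finType) (e1 : rel T1) (e2 : rel T2)
  : Prop := forall i : nat, matching_number e1 i = matching_number e2 i.

Definition num_colourings (T : finType) (e : rel T) (n : nat) : nat :=
  #|[set f : {ffun T -> 'I_n} | [forall x, forall y, e x y ==> (f x != f y)]]|.

(* p is the chromatic polynomial of the graph: its value at every natural
   number n is the number of proper n-colourings. (Such a polynomial exists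
   and is unique.) *)
Definition is_chromatic_poly (T : finType) (e : rel T) (p : {poly int}) : Prop :=
  forall n : nat, p.[n%:R] = (num_colourings e n)%:R.

Definition falling (n : nat) : {poly int} := \prod_(i < n) ('X - (i%:R)%:P).

Definition interesting_factor (k : nat) (p : {poly int}) : {poly int} :=
  p %/ falling k.

(* Main.v *)
Require Import Defs.
From HB Require Import structures.
From mathcomp Require Import all_boot all_order all_algebra.
Set Implicit Arguments. Unset Strict Implicit. Unset Printing Implicit Defensive.
Import GRing.Theory.

Lemma count_idem (T C : finType) (rho : T -> T) (hid : forall x, rho (rho x) = rho x) :
 #|[set f : {ffun T -> C} | [forall x, f (rho x) == f x] &&
     [forall x, forall y, [&& rho x == x, rho y == y & f x == f y] ==> (x == y)]]|
  = (#|C| ^_ #|[pred x | rho x == x]|)%N.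
Proof.
pose S := {x : T | rho x == x}.
have hS : forall x, rho (rho x) == rho x by move=> x; rewrite hid.
pose F (phi : {ffun S -> C}) : {ffun T -> C} :=
  [ffun x => phi (exist _ (rho x) (hS x))].
have Finj : injective F.
  move=> p q /ffunP Hpq; apply/ffunP => s.
  have := Hpq (val s); rewrite !ffunE.
  have -> : exist (fun x => rho x == x) (rho (val s)) (hS (val s)) = s.
    by apply: val_inj => /=; apply/eqP; case: s.
  by [].
rewrite -card_sig -card_inj_ffuns -(card_imset _ Finj).
apply: eq_card => f; rewrite !inE; apply/idP/idP.
- case/andP => /forallP H1 /forallP H2.
  apply/imsetP; exists [ffun s : S => f (val s)].
    rewrite inE; apply/injectiveP => s t; rewrite !ffunE => Hst.
    apply: val_inj; have := H2 (val s); move/forallP/(_ (val t)).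
    by rewrite Hst (valP s) (valP t) eqxx /= => /eqP.
  by apply/ffunP => x; rewrite !ffunE /= (eqP (H1 x)).
- case/imsetP => phi; rewrite inE => /injectiveP Hphi ->.
  apply/andP; split; apply/forallP => x.
    rewrite !ffunE; apply/eqP; congr (phi _); apply: val_inj => /=; exact: hid.
  apply/forallP => y; apply/implyP => /and3P [/eqP hx /eqP hy]; rewrite !ffunE => /eqP Hxy.
  have := Hphi _ _ Hxy => /(congr1 val) /= ; rewrite hx hy => ->; exact: eqxx.
Qed.


Definition partner j k (M : {set {set ('I_j + 'I_k)%type}}) (a : 'I_j) :=
  [pick b | [set inl a; inr b] \in M].

Definition rho j k (M : {set {set ('I_j + 'I_k)%type}}) (x : ('I_j + 'I_k)%type)
  : ('I_j + 'I_k)%type :=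
  match x with
  | inl a => if partner M a is Some b then inr b else inl a
  | inr b => inr b
  end.

Lemma rho_idem j k M x : @rho j k M (rho M x) = rho M x.
Proof. case: x => [a|b] //=; by case E: (partner M a) => [b|] /=; rewrite ?E. Qed.

Lemma edge_shape j k (e : rel ('I_j + 'I_k)%type) (he : biclique e) A :
  is_edge (complement e) A -> exists a b, A = [set inl a; inr b] /\ ~~ e (inl a) (inr b).
Proof.
move: he; rewrite /biclique /simple_graph => [[[hsym hirr] [hl hr]]].
case/existsP => x /existsP [y /andP [/andP [hxy hne] /eqP ->]].
case: x y hxy hne => [a|b] [a'|b'] hxy hne.
- by move: hne; rewrite hl // ; apply: contra hxy => /eqP ->.
- by exists a, b'.
- by exists a', b; split; [apply: setUC | rewrite hsym].
- by move: hne; rewrite hr // ; apply: contra hxy => /eqP ->.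
Qed.

Lemma set2_lr j k (a a' : 'I_j) (b b' : 'I_k) :
  [set (inl a : ('I_j + 'I_k)%type); inr b] = [set inl a'; inr b'] -> a = a' /\ b = b'.
Proof.
move=> H; split.
  have : (inl a : ('I_j + 'I_k)%type) \in [set inl a'; inr b'] by rewrite -H set21.
  by rewrite !inE => /orP [/eqP [] | /eqP].
have : (inr b : ('I_j + 'I_k)%type) \in [set inl a'; inr b'] by rewrite -H set22.
by rewrite !inE => /orP [/eqP | /eqP []].
Qed.

Lemma match_edge (j k : nat) (e : rel ('I_j + 'I_k)%type) (he : biclique e) M (hM : is_matching (complement e) M) A :
  A \in M -> exists a b, A = [set inl a; inr b] /\ ~~ e (inl a) (inr b).
Proof.
case/andP: hM => /forallP H1 _ HA; apply: (edge_shape he).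
by have := H1 A; rewrite HA.
Qed.

Lemma match_noedge (j k : nat) (e : rel ('I_j + 'I_k)%type) (he : biclique e) M (hM : is_matching (complement e) M) a b :
  [set inl a; inr b] \in M -> ~~ e (inl a) (inr (b : 'I_k) : ('I_j + 'I_k)%type).
Proof.
move=> /(match_edge he hM) [a0 [b0 [/set2_lr [-> ->] //]]].
Qed.

Lemma match_disj (j k : nat) (e : rel ('I_j + 'I_k)%type) M (hM : is_matching (complement e) M) (A B : {set ('I_j + 'I_k)%type}) x :
  A \in M -> B \in M -> x \in A -> x \in B -> A = B.
Proof.
case/andP: hM => _ /forallP H2 HA HB xA xB.
have := H2 A; rewrite HA /= => /forallP /(_ B); rewrite HB /= => /implyP H.
apply/eqP; apply/negPn; apply/negP => /H /disjointFr /(_ xA); by rewrite xB.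
Qed.

Lemma match_l (j k : nat) (e : rel ('I_j + 'I_k)%type) M (hM : is_matching (complement e) M) a (b b' : 'I_k) :
  [set (inl a : ('I_j + 'I_k)%type); inr b] \in M -> [set inl a; inr b'] \in M -> b = b'.
Proof.
move=> H1 H2; have := match_disj hM H1 H2 (set21 _ _) (set21 _ _).
by move/set2_lr => [].
Qed.

Lemma match_r (j k : nat) (e : rel ('I_j + 'I_k)%type) M (hM : is_matching (complement e) M) a a' (b : 'I_k) :
  [set (inl a : ('I_j + 'I_k)%type); inr b] \in M -> [set inl a'; inr b] \in M -> a = a'.
Proof.
move=> H1 H2; have := match_disj hM H1 H2 (set22 _ _) (set22 _ _).
by move/set2_lr => [].
Qed.

Lemma eq_inl (A B : eqType) (a a' : A) : (inl a == inl a' :> (A + B)%type) = (a == a').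
Proof. by apply/eqP/eqP => [[]|->]. Qed.
Lemma eq_inr (A B : eqType) (a a' : B) : (inr a == inr a' :> (A + B)%type) = (a == a').
Proof. by apply/eqP/eqP => [[]|->]. Qed.
Lemma eq_inlr (A B : eqType) (a : A) (b : B) : (inl a == inr b :> (A + B)%type) = false.
Proof. by []. Qed.
Lemma eq_inrl (A B : eqType) (a : A) (b : B) : (inr b == inl a :> (A + B)%type) = false.
Proof. by []. Qed.

Definition properb (T : finType) (e : rel T) n (f : {ffun T -> 'I_n}) :=
  [forall x, forall y, e x y ==> (f x != f y)].
Definition Mof (T : finType) (e : rel T) n (f : {ffun T -> 'I_n}) : {set {set T}} :=
  [set A | is_edge (complement e) A && [forall x in A, forall y in A, f x == f y]].
Definition Fcond (T C : finType) (r : T -> T) (f : {ffun T -> C}) :=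
  [forall x, f (r x) == f x] &&
  [forall x, forall y, [&& r x == x, r y == y & f x == f y] ==> (x == y)].

Lemma in_Mof (j k : nat) (e : rel ('I_j + 'I_k)%type) (he : biclique e) n
   (f : {ffun ('I_j + 'I_k)%type -> 'I_n}) a b :
  ([set inl a; inr b] \in Mof e f) = ~~ e (inl a) (inr b) && (f (inl a) == f (inr b)).
Proof.
rewrite /Mof inE; apply/idP/idP.
- case/andP => /(edge_shape he) [a0 [b0 [/set2_lr [-> ->] hn]]].
  move/forallP/(_ (inl a0)); rewrite set21 /= => /forallP/(_ (inr b0)); rewrite set22 /= => ->.
  by rewrite hn.
- case/andP => hn hf; apply/andP; split.
    apply/existsP; exists (inl a); apply/existsP; exists (inr b).
    by rewrite /complement hn eqxx andbT.
  apply/forallP=> x; apply/implyP; rewrite !inE => /orP[/eqP->|/eqP->];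
  apply/forallP=> y; apply/implyP; rewrite !inE => /orP[/eqP->|/eqP->];
  by rewrite ?(eqP hf) eqxx.
Qed.

Lemma fiber (j k : nat) (e : rel ('I_j + 'I_k)%type) (he : biclique e) n M
   (hM : is_matching (complement e) M) (f : {ffun ('I_j + 'I_k)%type -> 'I_n}) :
 (properb e f && (Mof e f == M)) = Fcond (rho M) f.
Proof.
have he' := he; move: he'; rewrite /biclique /simple_graph => [[[hsym hirr] [hl hr]]].
apply/idP/idP.
- case/andP => hp /eqP HM.
  have hp' : forall x y, e x y -> f x != f y.
    by move=> x y; move/forallP: hp => /(_ x) /forallP /(_ y) /implyP.
  have cross : forall a b, f (inl a) = f (inr b) -> [set inl a; inr b] \in M.
    move=> a b hab; rewrite -HM in_Mof // hab eqxx andbT.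
    by apply/negP => /hp'; rewrite hab eqxx.
  apply/andP; split.
  + apply/forallP => -[a|b] //=.
    rewrite /partner; case: pickP => // b' Hb.
    by rewrite -HM in_Mof // in Hb; case/andP: Hb => _ /eqP ->.
  + apply/forallP => x; apply/forallP => y; apply/implyP => /and3P [hx hy /eqP hxy].
    case: x y hx hy hxy => [a|b] [a'|b'] hx hy hxy.
    * case: (eqVneq a a') => [->|haa]; first by rewrite eqxx.
      by move: (hp' _ _ (hl _ _ haa)); rewrite hxy eqxx.
    * move: hx => /=; rewrite /partner; case: pickP => [b0 _|Hn] //.
      by have := cross _ _ hxy; rewrite Hn.
    * move: hy => /=; rewrite /partner; case: pickP => [b0 _|Hn] //.
      by have := cross _ _ (esym hxy); rewrite Hn.
    * case: (eqVneq b b') => [->|haa]; first by rewrite eqxx.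
      by move: (hp' _ _ (hr _ _ haa)); rewrite hxy eqxx.
- case/andP => /forallP H1 /forallP H2.
  have K : forall x y, f x = f y -> rho M x = rho M y.
    move=> x y hxy; have := H2 (rho M x); move/forallP/(_ (rho M y)).
    by rewrite !rho_idem !eqxx (eqP (H1 x)) (eqP (H1 y)) hxy eqxx /= => /eqP.
  have cross : forall a b, f (inl a) = f (inr b) -> [set inl a; inr b] \in M.
    move=> a b /K /=; rewrite /partner; case: pickP => [b0 Hb [<-] // | _ //].
  have part : forall a b, [set inl a; inr b] \in M -> f (inl a) = f (inr b).
    move=> a b Hab; rewrite -(eqP (H1 (inl a))) /= /partner; case: pickP => [b0 Hb0|Hn].
      by rewrite (match_l hM Hab Hb0).
    by rewrite Hn in Hab.
  apply/andP; split.
  + apply/forallP => x; apply/forallP => y; apply/implyP => hxy; apply/negP => /eqP hf.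
    case: x y hxy hf => [a|b] [a'|b'] hxy hf.
    * move: (K _ _ hf) => /=; rewrite /partner; case: pickP => [b0 H0|H0]; case: pickP => [b1 H1'|H1'] //.
      - case=> eb; rewrite eb in H0; have eaa := match_r hM H0 H1'; subst.
        by rewrite hirr in hxy.
      - by case=> eaa; subst; rewrite hirr in hxy.
    * by have := match_noedge he hM (cross _ _ hf); rewrite hxy.
    * by have := match_noedge he hM (cross _ _ (esym hf)); rewrite hsym hxy.
    * by move: (K _ _ hf) => /= [eb]; subst; rewrite hirr in hxy.
  + apply/eqP/setP => A; apply/idP/idP.
    * rewrite /Mof inE => /andP [/(edge_shape he) [a [b [-> _]]]].
      move/forallP/(_ (inl a)); rewrite set21 /= => /forallP/(_ (inr b)); rewrite set22 /=.
      by move/eqP; apply: cross.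
    * move=> HA; have [a [b [EA hn]]] := match_edge he hM HA; rewrite EA in HA *.
      by rewrite in_Mof // hn (part _ _ HA) eqxx.
Qed.

Lemma Mof_matching (j k : nat) (e : rel ('I_j + 'I_k)%type) (he : biclique e) n
   (f : {ffun ('I_j + 'I_k)%type -> 'I_n}) (hp : properb e f) :
  is_matching (complement e) (Mof e f).
Proof.
have he' := he; move: he'; rewrite /biclique /simple_graph => [[[hsym hirr] [hl hr]]].
have hp' : forall x y, e x y -> f x != f y.
  by move=> x y; move/forallP: hp => /(_ x) /forallP /(_ y) /implyP.
apply/andP; split.
  by apply/forallP => A; apply/implyP; rewrite /Mof inE => /andP[].
apply/forallP => A; apply/implyP => HA; apply/forallP => B; apply/implyP => HB.
apply/implyP => hAB.
move: (HA); rewrite /Mof inE => /andP [/(edge_shape he) [a [b [EA _]]] _]; subst A.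
move: (HB); rewrite /Mof inE => /andP [/(edge_shape he) [a' [b' [EB _]]] _]; subst B.
rewrite !in_Mof // in HA HB.
case/andP: HA => _ /eqP fa; case/andP: HB => _ /eqP fa'.
have hab : (a != a') && (b != b').
  case: (eqVneq a a') => [eaa|haa] /=.
    subst; case: (eqVneq b b') => [ebb|hbb]; first by subst; rewrite eqxx in hAB.
    by move: (hp' _ _ (hr _ _ hbb)); rewrite -fa -fa' eqxx.
  case: (eqVneq b b') => [ebb|hbb] //.
  by subst; move: (hp' _ _ (hl _ _ haa)); rewrite fa fa' eqxx.
case/andP: hab => haa hbb.
rewrite -setI_eq0; apply/eqP/setP => -[c|c]; rewrite !inE /=.
  rewrite !eq_inl !eq_inlr /= !orbF.
  by case: (eqVneq c a) => [->|] //=; rewrite (negPf haa).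
rewrite !eq_inr /=.
by case: (eqVneq c b) => [->|] //=; rewrite (negPf hbb).
Qed.

Lemma card_U (j k : nat) (e : rel ('I_j + 'I_k)%type) (he : biclique e) M
   (hM : is_matching (complement e) M) :
  #|[set a | partner M a != None]| = #|M|.
Proof.
pose g (a : 'I_j) : {set ('I_j + 'I_k)%type} :=
  [set x | (x == inl a) || [exists b, ([set inl a; inr b] \in M) && (x == inr b)]].
have gE : forall a b, [set inl a; inr b] \in M -> g a = [set inl a; inr b].
  move=> a b Hab; rewrite /g; apply/setP => -[c|c]; rewrite !inE.
    by rewrite eq_inl; case: (c == a) => //=; apply/existsP => -[b' /andP[_ /eqP]].
  rewrite eq_inr /=; apply/existsP/idP => [[b' /andP [Hb' /eqP [->]]]|/eqP ->].
    by rewrite (match_l hM Hab Hb').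
  by exists b; rewrite Hab eqxx.
have ginj : injective g.
  move=> a a' Hg; have : inl a \in g a' by rewrite -Hg !inE eqxx.
  rewrite !inE eq_inl => /orP [/eqP //|/existsP [b /andP [_ /eqP]]] //.
rewrite -(card_imset _ ginj); apply: eq_card => A.
apply/imsetP/idP.
- case=> a; rewrite inE /partner; case: pickP => // b Hb _ ->.
  by rewrite (gE _ _ Hb).
- move=> HA; have [a [b [EA _]]] := match_edge he hM HA; exists a.
    by rewrite inE /partner; case: pickP => // /(_ b); rewrite -EA HA.
  by rewrite (gE a b) -EA.
Qed.

Lemma card_fix (j k : nat) (e : rel ('I_j + 'I_k)%type) (he : biclique e) M
   (hM : is_matching (complement e) M) :
  #|[pred x | rho M x == x]| = (k + (j - #|M|))%N.
Proof.
rewrite -(card_U he hM).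
set U := [set a | partner M a != None].
have hU : #|U| <= j by rewrite -[X in _ <= X](card_ord j) max_card.
have hC : #|[predC [pred x | rho M x == x]]| = #|U|.
  rewrite -(card_imset _ (@inl_inj 'I_j 'I_k)); apply: eq_card => -[a|b]; rewrite !inE /=.
    rewrite (mem_imset _ _ (@inl_inj _ _)) inE.
    by case: (partner M a) => [b|] /=; rewrite ?eqxx.
  by rewrite eqxx; apply/esym/imsetP => -[a _].
have := cardC [pred x | rho M x == x]; rewrite hC card_sum !card_ord.
move=> H; rewrite addnBA // [k + j]addnC -H addnK //.
Qed.

Lemma numcol_sum (j k : nat) (e : rel ('I_j + 'I_k)%type) (he : biclique e) n :
  num_colourings e n = (\sum_(M | is_matching (complement e) M) n ^_ (k + (j - #|M|)))%N.
Proof.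
transitivity (\sum_(f : {ffun ('I_j + 'I_k)%type -> 'I_n} | properb e f) 1)%N.
  by rewrite sum1_card; apply: eq_card => f; rewrite inE.
rewrite (partition_big (@Mof _ e n) (@is_matching _ (complement e))) /=; last first.
  by move=> f; apply: Mof_matching.
apply: eq_bigr => M hM; rewrite sum1_card.
rewrite -(card_fix he hM).
have := count_idem 'I_n (@rho_idem j k M); rewrite card_ord => <-.
apply: eq_card => f; rewrite inE; exact: (fiber he hM f).
Qed.

Lemma match_le (j k : nat) (e : rel ('I_j + 'I_k)%type) (he : biclique e) M
   (hM : is_matching (complement e) M) : #|M| <= j.
Proof. by rewrite -(card_U he hM) -[X in _ <= X](card_ord j) max_card. Qed.

Lemma numcol_m (j k : nat) (e : rel ('I_j + 'I_k)%type) (he : biclique e) n :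
  num_colourings e n =
  (\sum_(i < j.+1) matching_number (complement e) i * n ^_ (k + (j - i)))%N.
Proof.
rewrite (numcol_sum he).
rewrite (partition_big (fun M : {set {set ('I_j + 'I_k)%type}} => inord #|M| : 'I_j.+1) xpredT) //=.
apply: eq_bigr => i _.
rewrite (eq_bigr (fun _ => n ^_ (k + (j - i)))); last first.
  move=> M /andP [hM /eqP <-]; rewrite inordK ?ltnS //. exact: (match_le he hM).
rewrite sum_nat_const /matching_number; congr (_ * _).
apply: eq_card => M; rewrite !inE; apply: andb_id2l => hM.
have hMj := match_le he hM.
apply/eqP/eqP => [<-|->]; first by rewrite inordK // ltnS.
by apply: val_inj; rewrite /= inordK // ltnS.
Qed.

Local Open Scope ring_scope.

Definition Fk (k r : nat) : {poly int} := \prod_(t < r) ('X - ((k + t)%N%:R)%:P).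

Definition Qp (j k : nat) (e : rel ('I_j + 'I_k)%type) : {poly int} :=
  \sum_(i < j.+1) Fk k (j - i) *+ matching_number (complement e) i.

Lemma falling_split k r : falling k * Fk k r = falling (k + r).
Proof.
rewrite /falling /Fk [in RHS]big_split_ord /=.
by congr (_ * _).
Qed.

Lemma falling_eval m n : (falling m).[n%:R] = (n ^_ m)%:R.
Proof.
elim: m => [|m IH]; first by rewrite /falling big_ord0 hornerC.
rewrite /falling big_ord_recr /= hornerM -/(falling m) IH !hornerE ffactnSr.
case: (leqP m n) => hmn; first by rewrite natrM natrB.
by rewrite ffact_small // !mul0r.
Qed.

Lemma poly_nat_eq (p q : {poly int}) : (forall n : nat, p.[n%:R] = q.[n%:R]) -> p = q.
Proof.
move=> H; apply/eqP; rewrite -subr_eq0; apply/negPn/negP => hp.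
set rs := [seq (i%:R : int) | i <- iota 0 (size (p - q))].
have h1 : all (root (p - q)) rs.
  by apply/allP => x /mapP [i _ ->]; rewrite /root !hornerE H subrr.
have h2 : uniq rs.
  rewrite map_inj_uniq ?iota_uniq //.
  by move=> a b /eqP; rewrite Num.Theory.eqr_nat => /eqP.
by have := max_poly_roots hp h1 h2; rewrite size_map size_iota ltnn.
Qed.

Lemma PQ (j k : nat) (e : rel ('I_j + 'I_k)%type) (he : biclique e) (P : {poly int})
  (hP : is_chromatic_poly e P) : P = falling k * Qp e.
Proof.
apply: poly_nat_eq => n; rewrite hP (numcol_m he) /Qp mulr_sumr horner_sum natr_sum.
apply: eq_bigr => i _.
by rewrite mulrnAr falling_split hornerMn falling_eval natrM mulr_natl.
Qed.

Unset Implicit Arguments.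

Theorem mainTheorem2 (j kG kH : nat) (hj : (0 < j)%N) (hjk : (j <= kG)%N)
  (hk : (kG <= kH)%N)
  (G : rel ('I_j + 'I_kG)%type) (H : rel ('I_j + 'I_kH)%type)
  (hG : biclique G) (hH : biclique H)
  (PG PH : {poly int})
  (hPG : is_chromatic_poly G PG) (hPH : is_chromatic_poly H PH)
  (hmatch : matching_equivalent (complement G) (complement H)) :
  interesting_factor kG PG =
  (interesting_factor kH PH) \Po ('X + ((kH - kG)%N%:R)%:P).
Proof.
rewrite /interesting_factor (PQ hG hPG) (PQ hH hPH).
rewrite !Pdiv.IdomainMonic.mulKp ?monic_prod_XsubC //.
rewrite /Qp raddf_sum; apply: eq_bigr => i _.
rewrite raddfMn hmatch; congr (_ *+ _).
rewrite /= /Fk rmorph_prod; apply: eq_bigr => t _.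
rewrite rmorphB /= comp_polyX comp_polyC.
have -> : ((kH + t)%N%:R : int) = (kG + t)%N%:R + (kH - kG)%N%:R.
  by rewrite -natrD addnAC subnKC.
by rewrite polyCD opprD addrA addrAC addrK.
Qed.
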